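(* Let $\mathfrak a$ be an $n$-dimensional real Euclidean vector space, $\Delta\subset\mathfrak a^*$ a reduced root system (i.e. $2\alpha\notin\Delta$ for $\alpha\in\Delta$) with positive system $\Delta^+$, and $m$ a Weyl-group-invariant multiplicity function on $\Delta$ with $m_\alpha\in2\mathbb N$ for all $\alpha\in\Delta$. With the notation $\lambda_\alpha$, $\rho$, $P^+$, $\mathbf c(m,\lambda)$ and $d(m,\mu)$ explained in the context, the following hold: (1) For all $\mu\in P^+$, $$d(m,\mu)=\frac{\mathbf c(m,-\rho)}{\mathbf c(m,\mu+\rho)\,\mathbf c(m,-(\mu+\rho))}.$$ (2) The function $\mu\mapsto d(m,\mu)$ on $P^+$ extends to a polynomial function on $\mathfrak a^*_{\mathbb C}$, namely $$d(m,\lambda)=\prod_{\alpha\in\Delta^+}\prod_{k=0}^{m_\alpha/2-1}\frac{k^2-(\lambda+\rho)_\alpha^2}{k^2-\rho_\alpha^2}.$$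
   Context: The inner product $\langle\cdot,\cdot\rangle$ of $\mathfrak a$ is transferred to $\mathfrak a^*$ and extended complex-bilinearly to $\mathfrak a^*_{\mathbb C}$. For $\lambda\in\mathfrak a^*_{\mathbb C}$ and $\alpha\in\Delta$ put $\lambda_\alpha:=\langle\lambda,\alpha\rangle/\langle\alpha,\alpha\rangle$. Let $\rho:=\frac12\sum_{\alpha\in\Delta^+}m_\alpha\alpha$ and $P^+:=\{\mu\in\mathfrak a^*:\mu_\alpha\in\mathbb Z_{\ge0}\text{ for all }\alpha\in\Delta^+\}$. The $\mathbf c$-function is $$\mathbf c(m,\lambda):=\Big(C\prod_{\alpha\in\Delta^+}\prod_{k=0}^{m_\alpha/2-1}(\lambda_\alpha+k)\Big)^{-1},\qquad C:=\prod_{\alpha\in\Delta^+}\prod_{k=0}^{m_\alpha/2-1}\frac1{\rho_\alpha+k},$$ a meromorphic function of $\lambda\in\mathfrak a^*_{\mathbb C}$. The Plancherel density is defined for $\mu\in P^+$ by Vretare's formula $$d(m,\mu):=\lim_{\varepsilon\to0}\frac{\mathbf c(m,-\rho+\varepsilon)}{\mathbf c(m,\mu+\rho)\,\mathbf c(m,-\mu-\rho+\varepsilon)},$$ with $\varepsilon\in\mathfrak a^*_{\mathbb C}$ tending to $0$. *)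

(* Defs.v *)
From HB Require Import structures.
From mathcomp Require Import all_boot all_order all_algebra.
From mathcomp Require Import complex.
From mathcomp Require Import reals.
Set Implicit Arguments. Unset Strict Implicit. Unset Printing Implicit Defensive.
Import Order.TTheory GRing.Theory Num.Theory.
Local Open Scope ring_scope.
Local Open Scope complex_scope.

Section RootData.
Variables (R : realType) (n : nat).
(* a = R^n with its standard inner product; a^* is identified with a
   through the inner product; a^*_C = C^n with the complex-bilinear extension. *)
Local Notation vec := 'rV[R]_n.
Local Notation cvec := 'rV[R[i]]_n.

Definition dotr (u v : vec) : R := \sum_(i < n) u 0 i * v 0 i.

Definition dotc (l : cvec) (a : vec) : R[i] := \sum_(i < n) l 0 i * (a 0 i)%:C.

Definition cpx (v : vec) : cvec := map_mx (fun x : R => x%:C) v.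

Definition refl (a x : vec) : vec := x - (2 * dotr x a / dotr a a) *: a.

Definition root_system (D : seq vec) : Prop :=
  [/\ uniq D,
      (0 : vec) \notin D,
      (forall x : vec, (forall a, a \in D -> dotr x a = 0) -> x = 0),
      (forall a b, a \in D -> b \in D -> refl a b \in D) &
      (forall a b, a \in D -> b \in D -> exists z : int, 2 * dotr b a / dotr a a = z%:~R)].

Definition reduced (D : seq vec) : Prop :=
  forall a, a \in D -> (2 : R) *: a \notin D.

Definition positive_system (D Dp : seq vec) : Prop :=
  uniq Dp /\
  exists xi : vec, (forall a, a \in D -> dotr a xi != 0) /\
     (forall a, (a \in Dp) = (a \in D) && (0 < dotr a xi)).

(* Weyl-group invariance: invariance under the generating reflections *)
Definition weyl_invariant (D : seq vec) (m : vec -> nat) : Prop :=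
  forall a b, a \in D -> b \in D -> m (refl a b) = m b.

Variables (Dp : seq vec) (m : vec -> nat).

Definition coef (l : cvec) (a : vec) : R[i] := dotc l a / (dotr a a)%:C.

Definition rho : vec := 2^-1 *: \sum_(a <- Dp) (m a)%:R *: a.

Definition Pplus (mu : vec) : Prop :=
  forall a, a \in Dp -> exists k : nat, dotr mu a / dotr a a = k%:R.

Definition Cconst : R[i] :=
  \prod_(a <- Dp) \prod_(k < (m a)./2) (coef (cpx rho) a + k%:R)^-1.

(* the c-function c(m,lambda) = (C prod prod (lambda_alpha + k))^-1;
   cden l is the expression being inverted, c is finite at l iff cden l != 0 *)
Definition cden (l : cvec) : R[i] :=
  Cconst * \prod_(a <- Dp) \prod_(k < (m a)./2) (coef l a + k%:R).

Definition cfun (l : cvec) : R[i] := (cden l)^-1.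

Definition vretare (mu : vec) (eps : cvec) : R[i] :=
  cfun (- cpx rho + eps) / (cfun (cpx (mu + rho)) * cfun (- cpx (mu + rho) + eps)).

Definition vretare_dom (mu : vec) (eps : cvec) : Prop :=
  [/\ cden (- cpx rho + eps) != 0, cden (cpx (mu + rho)) != 0 &
      cden (- cpx (mu + rho) + eps) != 0].

(* "d(m,mu) = L": lim_{eps -> 0} vretare mu eps = L, eps ranging over the
   domain of the meromorphic function, in a^*_C = C^n with the sup norm *)
Definition plancherel_is (mu : vec) (L : R[i]) : Prop :=
  forall e : R, 0 < e -> exists2 delta : R, 0 < delta &
    forall eps : cvec, vretare_dom mu eps ->
      (forall i, `|eps 0 i| < delta%:C) -> `|vretare mu eps - L| < e%:C.

Definition dpoly (l : cvec) : R[i] :=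
  \prod_(a <- Dp) \prod_(k < (m a)./2)
     ((k%:R ^+ 2 - coef (l + cpx rho) a ^+ 2) / (k%:R ^+ 2 - coef (cpx rho) a ^+ 2)).

End RootData.

(* Main.v *)
Require Import Defs.
From HB Require Import structures.
From mathcomp Require Import all_boot all_order all_algebra.
From mathcomp Require Import complex.
From mathcomp Require Import reals.
From mathcomp Require Import ring lra.
Set Implicit Arguments. Unset Strict Implicit. Unset Printing Implicit Defensive.
Import Order.TTheory GRing.Theory Num.Theory.
Local Open Scope ring_scope.
Local Open Scope complex_scope.

Definition nr (R : realType) (z : R[i]) : R := complex.Re `|z|.

Lemma normE (R : realType) (z : R[i]) : `|z| = (nr z)%:C.
Proof. by rewrite /nr (@RRe_real R) // normr_real. Qed.

Lemma nr_ge0 (R : realType) (z : R[i]) : 0 <= nr z.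
Proof. by have := normr_ge0 z; rewrite normE ler0c. Qed.

Lemma nrM (R : realType) (x y : R[i]) : nr (x * y) = nr x * nr y.
Proof. by apply: complexI; rewrite rmorphM -!normE normrM. Qed.

Lemma nrD (R : realType) (x y : R[i]) : nr (x + y) <= nr x + nr y.
Proof. by rewrite -lecR rmorphD -!normE ler_normD. Qed.

Lemma nrB (R : realType) (x y : R[i]) : nr (x - y) = nr (y - x).
Proof. by rewrite /nr distrC. Qed.

Lemma nrV (R : realType) (x : R[i]) : nr (x^-1) = (nr x)^-1.
Proof. by apply: complexI; rewrite fmorphV -!normE normfV. Qed.

Lemma nr_eq0 (R : realType) (x : R[i]) : (nr x == 0) = (x == 0).
Proof. by rewrite -[x == 0]normr_eq0 normE (fmorph_eq0 (real_complex R)). Qed.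

Lemma nr0 (R : realType) : nr (0 : R[i]) = 0.
Proof. by apply/eqP; rewrite nr_eq0. Qed.

Definition small (R : realType) (n : nat) (F : 'rV[R[i]]_n -> R[i]) :=
  forall e : R, 0 < e -> exists2 d : R, 0 < d &
    forall eps : 'rV[R[i]]_n, (forall i, nr (eps 0 i) < d) -> nr (F eps - F 0) < e.

Lemma small_cst (R : realType) (n : nat) (c : R[i]) : small (fun _ : 'rV[R[i]]_n => c).
Proof. by move=> e e0; exists 1 => // eps _; rewrite subrr nr0. Qed.

Lemma small_coord (R : realType) (n : nat) (i : 'I_n) : small (fun eps : 'rV[R[i]]_n => eps 0 i).
Proof. by move=> e e0; exists e => // eps H; rewrite mxE subr0. Qed.

Lemma small_add (R : realType) (n : nat) (F G : 'rV[R[i]]_n -> R[i]) :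
  small F -> small G -> small (fun eps => F eps + G eps).
Proof.
move=> hF hG e e0.
have e2 : 0 < e / 2 by lra.
have [d1 d10 H1] := hF _ e2; have [d2 d20 H2] := hG _ e2.
exists (Num.min d1 d2); first by rewrite lt_min d10.
move=> eps Heps.
have Heps' i : nr (eps 0 i) < d1 /\ nr (eps 0 i) < d2.
  by have := Heps i; rewrite lt_min => /andP.
have h1 := H1 eps (fun i => proj1 (Heps' i)).
have h2 := H2 eps (fun i => proj2 (Heps' i)).
have := nrD (F eps - F 0) (G eps - G 0).
have -> : F eps - F 0 + (G eps - G 0) = F eps + G eps - (F 0 + G 0) by ring.
lra.
Qed.

Lemma small_mul (R : realType) (n : nat) (F G : 'rV[R[i]]_n -> R[i]) :
  small F -> small G -> small (fun eps => F eps * G eps).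
Proof.
move=> hF hG e e0.
set A := nr (F 0) + 1; set B := nr (G 0) + 1.
have A0 : 0 < A by rewrite /A; have := nr_ge0 (F 0); lra.
have B0 : 0 < B by rewrite /B; have := nr_ge0 (G 0); lra.
have eA : 0 < Num.min 1 (e / (2 * A)).
  by rewrite lt_min ltr01 /= divr_gt0 // mulr_gt0.
have eB : 0 < e / (2 * B) by rewrite divr_gt0 // mulr_gt0.
have [d1 d10 H1] := hF _ eB; have [d2 d20 H2] := hG _ eA.
exists (Num.min d1 d2); first by rewrite lt_min d10.
move=> eps Heps.
have Heps' i : nr (eps 0 i) < d1 /\ nr (eps 0 i) < d2.
  by have := Heps i; rewrite lt_min => /andP.
have h1 := H1 eps (fun i => proj1 (Heps' i)).
have h2 := H2 eps (fun i => proj2 (Heps' i)).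
move: h2; rewrite lt_min => /andP[h21 h22].
have -> : F eps * G eps - F 0 * G 0 = (F eps - F 0) * G eps + F 0 * (G eps - G 0) by ring.
have hG1 : nr (G eps) < B.
  have := nrD (G eps - G 0) (G 0); rewrite subrK; rewrite /B; lra.
have := nrD ((F eps - F 0) * G eps) (F 0 * (G eps - G 0)); rewrite !nrM.
have p1 : nr (F eps - F 0) * nr (G eps) < e / (2 * B) * B.
  by apply: ltr_pM; rewrite ?nr_ge0.
have p2 : nr (F 0) * nr (G eps - G 0) <= A * (e / (2 * A)).
  by apply: ler_pM; rewrite ?nr_ge0 ?ltW // /A; lra.
have q1 : e / (2 * B) * B = e / 2 by field; rewrite gt_eqF.
have q2 : A * (e / (2 * A)) = e / 2 by field; rewrite gt_eqF.
lra.
Qed.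

Lemma small_inv (R : realType) (n : nat) (F : 'rV[R[i]]_n -> R[i]) :
  small F -> F 0 != 0 -> small (fun eps => (F eps)^-1).
Proof.
move=> hF nz e e0.
set x0 := F 0 in nz *.
set a := nr x0.
have a0 : 0 < a by rewrite lt_def nr_eq0 nz nr_ge0.
have e1 : 0 < Num.min (a / 2) (e * a * a / 2).
  by rewrite lt_min !divr_gt0 ?mulr_gt0.
have [d d0 H] := hF _ e1.
exists d => // eps Heps.
move: (H eps Heps); rewrite -/x0 lt_min => /andP[h1 h2].
set x := F eps in h1 h2 *.
have hx : a / 2 < nr x.
  have := nrD (x0 - x) x; rewrite subrK nrB; rewrite -/a; lra.
have xnz : x != 0 by rewrite -nr_eq0; apply/eqP => h; rewrite h in hx; lra.
have -> : x^-1 - x0^-1 = (x0 - x) / (x * x0) by field; rewrite xnz nz.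
rewrite nrM nrV nrM -/a ltr_pdivrMr; last by rewrite mulr_gt0 //; lra.
rewrite nrB.
have : e * a * a / 2 <= e * (nr x * a).
  have -> : e * a * a / 2 = e * (a / 2 * a) by field.
  by rewrite ler_pM2l // ler_pM2r // ltW.
lra.
Qed.

Lemma small_ext (R : realType) (n : nat) (F G : 'rV[R[i]]_n -> R[i]) :
  (forall x, F x = G x) -> small F -> small G.
Proof.
move=> FG hF e e0; have [d d0 H] := hF e e0; exists d => // eps /H.
by rewrite !FG.
Qed.

Lemma small_sum (R : realType) (n : nat) (I : Type) (r : seq I)
  (F : I -> 'rV[R[i]]_n -> R[i]) :
  (forall i, small (F i)) -> small (fun eps => \sum_(i <- r) F i eps).
Proof.
move=> hF; elim: r => [|j r IH].
  by apply: small_ext (small_cst _ 0) => x; rewrite big_nil.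
by apply: small_ext (small_add (hF j) IH) => x; rewrite big_cons.
Qed.

Lemma small_prod (R : realType) (n : nat) (I : Type) (r : seq I)
  (F : I -> 'rV[R[i]]_n -> R[i]) :
  (forall i, small (F i)) -> small (fun eps => \prod_(i <- r) F i eps).
Proof.
move=> hF; elim: r => [|j r IH].
  by apply: small_ext (small_cst _ 1) => x; rewrite big_nil.
by apply: small_ext (small_mul (hF j) IH) => x; rewrite big_cons.
Qed.


Lemma dotrC (R : realType) (n : nat) (u v : 'rV[R]_n) : dotr u v = dotr v u.
Proof. by rewrite /dotr; apply: eq_bigr => i _; rewrite mulrC. Qed.

Lemma dotrDl (R : realType) (n : nat) (u v w : 'rV[R]_n) :
  dotr (u + v) w = dotr u w + dotr v w.
Proof. by rewrite /dotr -big_split; apply: eq_bigr => i _; rewrite mxE mulrDl. Qed.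

Lemma dotrZl (R : realType) (n : nat) k (u w : 'rV[R]_n) :
  dotr (k *: u) w = k * dotr u w.
Proof. by rewrite /dotr mulr_sumr; apply: eq_bigr => i _; rewrite mxE mulrA. Qed.

Lemma dotrNl (R : realType) (n : nat) (u w : 'rV[R]_n) :
  dotr (- u) w = - dotr u w.
Proof. by rewrite /dotr -sumrN; apply: eq_bigr => i _; rewrite mxE mulNr. Qed.

Lemma dotr0l (R : realType) (n : nat) (w : 'rV[R]_n) : dotr 0 w = 0.
Proof. by rewrite /dotr big1 // => i _; rewrite mxE mul0r. Qed.

Lemma dotr_suml (R : realType) (n : nat) (I : Type) (r : seq I) (F : I -> 'rV[R]_n) w :
  dotr (\sum_(i <- r) F i) w = \sum_(i <- r) dotr (F i) w.
Proof.
elim: r => [|j r IH]; first by rewrite !big_nil dotr0l.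
by rewrite !big_cons dotrDl IH.
Qed.

Lemma dotr_refl (R : realType) (n : nat) (a b w : 'rV[R]_n) :
  dotr (refl a b) w = dotr b w - (2 * dotr b a / dotr a a) * dotr a w.
Proof. by rewrite /refl dotrDl dotrNl dotrZl. Qed.

Lemma refl_invol (R : realType) (n : nat) (a x : 'rV[R]_n) :
  dotr a a != 0 -> refl a (refl a x) = x.
Proof.
move=> aa; rewrite {1}/refl dotr_refl.
have -> : 2 * (dotr x a - 2 * dotr x a / dotr a a * dotr a a) / dotr a a
   = - (2 * dotr x a / dotr a a) by field.
by rewrite /refl scaleNr opprK subrK.
Qed.

Lemma dotr_gt0 (R : realType) (n : nat) (a : 'rV[R]_n) : a != 0 -> 0 < dotr a a.
Proof.
move=> a0; have ge : forall i : 'I_n, true -> 0 <= a 0 i * a 0 i.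
  by move=> i _; rewrite -expr2 sqr_ge0.
rewrite lt_def sumr_ge0 // andbT /dotr psumr_eq0 //.
apply: contra a0 => /allP h; apply/eqP/rowP => i.
have := h i (mem_index_enum i); rewrite mxE /= mulf_eq0 orbb => /eqP ->.
by [].
Qed.

Lemma key_ineq (R : realType) (n : nat) (D Dp : seq 'rV[R]_n) (m : 'rV[R]_n -> nat) :
  root_system D -> positive_system D Dp -> weyl_invariant D m ->
  forall a, a \in Dp ->
  (m a)%:R * dotr a a <= \sum_(b <- Dp) (m b)%:R * dotr b a.
Proof.
move=> [uD n0D _ reflD _] [uDp [xi [regxi posxi]]] winv a aDp.
have DpD b : b \in Dp -> b \in D by rewrite posxi => /andP[].
have posD b : b \in Dp -> 0 < dotr b xi by rewrite posxi => /andP[].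
have aD := DpD a aDp.
have aa0 : 0 < dotr a a.
  by apply: dotr_gt0; apply: contraNneq n0D => <-.
have aan : dotr a a != 0 by rewrite gt_eqF.
pose s := refl a.
pose F b := (m b)%:R * dotr b a.
rewrite (bigID (fun b => s b \in Dp)) /=.
have S0 : \sum_(b <- Dp | s b \in Dp) F b = 0.
  rewrite -big_filter; set S := filter _ Dp.
  have sK x : s (s x) = x by apply: refl_invol.
  have pS : perm_eq (map s S) S.
    apply: uniq_perm; rewrite ?map_inj_uniq ?filter_uniq //; first exact: can_inj sK.
    move=> x; apply/mapP/idP => [[b bS ->]|xS].
      move: bS; rewrite !mem_filter sK => /andP[-> ->] //.
    by exists (s x); rewrite ?sK // mem_filter sK; move: xS; rewrite mem_filter => /andP[-> ->].
  have h : \sum_(b <- S) F b = - \sum_(b <- S) F b.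
    rewrite -{1}(perm_big _ pS) big_map -sumrN; apply: eq_big_seq => b.
    rewrite mem_filter => /andP[_ bDp].
    rewrite /F /s winv // ?DpD // dotr_refl.
    have -> : dotr b a - 2 * dotr b a / dotr a a * dotr a a = - dotr b a by field.
    by rewrite mulrN.
  lra.
rewrite S0 add0r -big_filter.
have saN : s a \notin Dp.
  rewrite posxi negb_and; apply/orP; right; rewrite -leNgt /s dotr_refl.
  have -> : dotr a xi - 2 * dotr a a / dotr a a * dotr a xi = - dotr a xi by field.
  by rewrite oppr_le0 ltW // posD.
rewrite (bigD1_seq a) ?filter_uniq // ?mem_filter ?saN //=.
rewrite lerDl big_seq_cond sumr_ge0 // => b /andP[]; rewrite mem_filter => /andP[nb bDp] _.
rewrite /F mulr_ge0 ?ler0n //.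
move: nb; rewrite posxi reflD ?DpD //= -leNgt /s dotr_refl => h.
rewrite leNgt; apply/negP => hneg.
have hc : 2 * dotr b a / dotr a a < 0.
  by rewrite ltr_pdivrMr // mul0r; lra.
have ha := posD a aDp; have hb := posD b bDp.
nra.
Qed.

Lemma rho_bound (R : realType) (n : nat) (D Dp : seq 'rV[R]_n) (m : 'rV[R]_n -> nat) :
  root_system D -> positive_system D Dp -> weyl_invariant D m ->
  forall a, a \in Dp -> forall k : nat, (k < (m a)./2)%N ->
  k%:R + 1 <= dotr (rho Dp m) a / dotr a a.
Proof.
move=> rs ps wi a aDp k hk.
have hkey := key_ineq rs ps wi aDp.
have aa0 : 0 < dotr a a.
  case: rs => _ n0D _ _ _; case: ps => _ [xi [_ posxi]].
  apply: dotr_gt0; apply: contraNneq n0D => a0.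
  by move: aDp; rewrite posxi a0 => /andP[].
have hm : ((k.+1).*2 <= m a)%N.
  have e := odd_double_half (m a).
  have h2 : ((k.+1).*2 <= (m a)./2.*2)%N by rewrite leq_double.
  by apply: leq_trans h2 _; rewrite -[X in (_ <= X)%N]e leq_addl.
have hm' : 2 * (k%:R + 1) <= (m a)%:R :> R.
  have := hm; rewrite -(ler_nat R) -muln2 natrM -addn1 natrD /=.
  by rewrite mulrC.
rewrite ler_pdivlMr // /rho dotrZl dotr_suml.
have -> : \sum_(b <- Dp) dotr ((m b)%:R *: b) a = \sum_(b <- Dp) (m b)%:R * dotr b a.
  by apply: eq_bigr => b _; rewrite dotrZl.
nra.
Qed.

Lemma cpxD (R : realType) (n : nat) (u v : 'rV[R]_n) : cpx (u + v) = cpx u + cpx v.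
Proof. by apply/rowP => i; rewrite !mxE rmorphD. Qed.

Lemma coef_cpx (R : realType) (n : nat) (v a : 'rV[R]_n) :
  coef (cpx v) a = (dotr v a / dotr a a)%:C.
Proof.
rewrite /coef /dotc /dotr rmorphM fmorphV; congr (_ * _).
by rewrite rmorph_sum; apply: eq_bigr => i _; rewrite mxE rmorphM.
Qed.

Lemma coefN (R : realType) (n : nat) (l : 'rV[R[i]]_n) a : coef (- l) a = - coef l a.
Proof.
by rewrite /coef /dotc -mulNr -sumrN; congr (_ * _); apply: eq_bigr => i _; rewrite mxE mulNr.
Qed.

Lemma small_coef (R : realType) (n : nat) (l : 'rV[R[i]]_n) (a : 'rV[R]_n) :
  small (fun eps => coef (l + eps) a).
Proof.
apply: (small_ext _ (small_mul (small_sum (index_enum 'I_n)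
   (fun i => small_mul (small_add (small_cst _ (l 0 i)) (small_coord i)) (small_cst _ ((a 0 i)%:C))))
   (small_cst _ ((dotr a a)%:C^-1)))).
by move=> x; rewrite /coef /dotc; congr (_ * _); apply: eq_bigr => i _; rewrite mxE.
Qed.

Lemma small_cden (R : realType) (n : nat) Dp (m : 'rV[R]_n -> nat) (l : 'rV[R[i]]_n) :
  small (fun eps => cden Dp m (l + eps)).
Proof.
have h a : small (fun eps => \prod_(k < (m a)./2) (coef (l + eps) a + k%:R)).
  exact: (small_prod (index_enum _) (fun k => small_add (small_coef l a) (small_cst _ _))).
exact: (small_ext _ (small_mul (small_cst _ (Cconst Dp m)) (small_prod Dp h))).
Qed.

Lemma inv3 (F : fieldType) (a b c : F) : a^-1 / (b^-1 * c^-1) = b * c / a.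
Proof. by rewrite invfM !invrK mulrC. Qed.

Unset Implicit Arguments.

Theorem corollary1p3 (R : realType) (n : nat) (D Dp : seq 'rV[R]_n)
    (m : 'rV[R]_n -> nat) :
  root_system D -> reduced D -> positive_system D Dp ->
  weyl_invariant D m -> (forall a, a \in D -> ~~ odd (m a)) ->
  (* (1) *)
  (forall mu, Pplus Dp mu ->
     plancherel_is Dp m mu
       (cfun Dp m (- cpx (rho Dp m)) /
        (cfun Dp m (cpx (mu + rho Dp m)) * cfun Dp m (- cpx (mu + rho Dp m))))) /\
  (* (2): the product formula is a polynomial (constant nonzero denominators)
     and it agrees with d(m, .) on P^+ *)
  (forall a, a \in Dp -> forall k : nat, (k < (m a)./2)%N ->
     (k%:R ^+ 2 - coef (cpx (rho Dp m)) a ^+ 2 : R[i]) != 0) /\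
  (forall mu, Pplus Dp mu -> plancherel_is Dp m mu (dpoly Dp m (cpx mu))).
Proof.
move=> rs _ ps wi _.
have hr := rho_bound rs ps wi.
set rh := rho Dp m in hr *.
have Cnz : Cconst Dp m != 0.
  rewrite /Cconst prodf_seq_neq0; apply/allP => a aDp /=.
  rewrite prodf_seq_neq0; apply/allP => k _ /=.
  rewrite invr_eq0 coef_cpx -(rmorph_nat (real_complex R)) -rmorphD fmorph_eq0.
  have := hr a aDp k (ltn_ord k); have := ler0n R k => h1 h2.
  rewrite gt_eqF //; lra.
have Dxnz : cden Dp m (- cpx rh) != 0.
  rewrite /cden mulf_neq0 // prodf_seq_neq0; apply/allP => a aDp /=.
  rewrite prodf_seq_neq0; apply/allP => k _ /=.
  rewrite coefN coef_cpx -(rmorph_nat (real_complex R)) -rmorphN -rmorphD fmorph_eq0.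
  have := hr a aDp k (ltn_ord k); have := ler0n R k => h1 h2.
  rewrite lt_eqF //; lra.
have part1 : forall mu, plancherel_is Dp m mu
       (cfun Dp m (- cpx rh) /
        (cfun Dp m (cpx (mu + rh)) * cfun Dp m (- cpx (mu + rh)))).
  move=> mu e e0.
  set y := cpx (mu + rh).
  pose V eps := cden Dp m y * cden Dp m (- y + eps) * (cden Dp m (- cpx rh + eps))^-1.
  have sV : small V.
    apply: small_mul; first exact: (small_mul (small_cst _ _) (small_cden Dp m (-y))).
    by apply: (small_inv (small_cden Dp m (- cpx rh))); rewrite /= addr0.
  have [d d0 H] := sV e e0.
  exists d => // eps _ Heps.
  have E1 : vretare Dp m mu eps = V eps.
    by rewrite /vretare /cfun /V inv3.
  have E0 : cfun Dp m (- cpx rh) / (cfun Dp m y * cfun Dp m (- y)) = V 0.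
    by rewrite /V !addr0 /cfun inv3.
  rewrite E1 E0 normE ltcR; apply: H => i.
  by have := Heps i; rewrite normE ltcR.
split; first by move=> mu _; exact: part1.
split.
  move=> a aDp k hk; rewrite coef_cpx -(rmorph_nat (real_complex R)) -!rmorphXn -rmorphB fmorph_eq0.
  have := hr a aDp k hk; have := ler0n R k => h1 h2.
  rewrite lt_eqF //; nra.
move=> mu _.
suff -> : dpoly Dp m (cpx mu) = cfun Dp m (- cpx rh) /
        (cfun Dp m (cpx (mu + rh)) * cfun Dp m (- cpx (mu + rh))) by exact: part1.
set y := cpx (mu + rh).
have step : dpoly Dp m (cpx mu) = \prod_(a <- Dp)
   ((\prod_(k < (m a)./2) (coef y a + k%:R)) * (\prod_(k < (m a)./2) (coef (- y) a + k%:R)) *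
    ((\prod_(k < (m a)./2) (coef (cpx rh) a + k%:R)^-1) *
     (\prod_(k < (m a)./2) (coef (- cpx rh) a + k%:R))^-1)).
  rewrite /dpoly; apply: eq_bigr => a _; rewrite -prodfV -!big_split /=.
  apply: eq_bigr => k _; rewrite -cpxD -/y !coefN.
  have -> : k%:R ^+ 2 - coef (cpx rh) a ^+ 2 = (coef (cpx rh) a + k%:R) * (- coef (cpx rh) a + k%:R) by ring.
  have -> : k%:R ^+ 2 - coef y a ^+ 2 = (coef y a + k%:R) * (- coef y a + k%:R) by ring.
  by rewrite invfM mulrA.
rewrite step !big_split /= prodfV -/(Cconst Dp m).
rewrite /cfun inv3.
have Pxnz : \prod_(a <- Dp) \prod_(k < (m a)./2) (coef (- cpx rh) a + k%:R) != 0.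
  by move: Dxnz; rewrite /cden mulf_eq0 negb_or => /andP[_ ->].
rewrite /cden.
by field; rewrite Pxnz Cnz.
Qed.
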